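(* Assume the abundance condition (A). Then for every $\boldsymbol m\in[0,1]^2$ an equilibrium exists, and in every equilibrium the machine rental rate is $r^*=F(\boldsymbol m)$ and the wage is $w^*=\max\{\bar w_s,\bar w_b,\bar w_t\}$. Every equilibrium allocation maximizes total output $Y$ over all feasible allocations. Moreover, together with these prices the following allocations form an equilibrium (and, whenever the maximum $\max\{\bar w_s,\bar w_b,\bar w_t\}$ is attained by exactly one of the three numbers, they form the unique equilibrium allocation): (i) if $\boldsymbol m\in R_s$: $\alpha_s^*=1$ and $\mu_s^*=\mu$ (only single-layer firms); (ii) if $\boldsymbol m\in R_b$: $\alpha_b^*=1$, $\mu_b^*=n(\boldsymbol m)$, $\mu_s^*=\mu-\mu_b^*$ (only bottom-automated and single-layer automated firms); (iii) if $\boldsymbol m\in R_t$: $\alpha_t^*=1$, $\mu_t^*=1/n(\boldsymbol h)$, $\mu_s^*=\mu-\mu_t^*$ (only top-automated and single-layer automated firms).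
   Context: Fix a cumulative distribution function $F$ on $[0,1]^2$ with a density $f$ that has full support on $[0,1]^2$; a problem $\boldsymbol x=(x_1,x_2)$ is drawn from $F$. Fix a communication cost $c\in(0,1)$, human knowledge $\boldsymbol h=(h_1,h_2)\in(0,1)^2$ (a unit mass of identical humans, each with one unit of time), and a mass $\mu>0$ of machines, each with one unit of time and common knowledge $\boldsymbol m=(m_1,m_2)\in[0,1]^2$. For $\boldsymbol x,\boldsymbol y\in[0,1]^2$ write $\boldsymbol x\vee\boldsymbol y=(\max\{x_1,y_1\},\max\{x_2,y_2\})$, and for $\boldsymbol x$ with $F(\boldsymbol x)<1$ let $n(\boldsymbol x)=\frac{1}{c(1-F(\boldsymbol x))}$. Given a wage $w\ge 0$ and rental rate $r\ge0$ (output price normalized to 1), there are four firm types with profits: single-layer non-automated (one human): $F(\boldsymbol h)-w$; single-layer automated (one machine): $F(\boldsymbol m)-r$; bottom-automated ($b$: one human solver and $n(\boldsymbol m)$ machine workers; available only when $F(\boldsymbol m)<1$): $\Pi_b=n(\boldsymbol m)[F(\boldsymbol m\vee\boldsymbol h)-r]-w$; top-automated ($t$: one machine solver and $n(\boldsymbol h)$ human workers): $\Pi_t=n(\boldsymbol h)[F(\boldsymbol m\vee\boldsymbol h)-w]-r$. A feasible allocation is $(\alpha_s,\alpha_b,\alpha_t,\mu_s,\mu_b,\mu_t)\ge 0$ (masses of humans in single-layer non-automated, $b$, $t$ firms; masses of machines in single-layer automated, $b$, $t$ firms) with $\mu_b=\alpha_b n(\boldsymbol m)$, $\mu_t=\alpha_t/n(\boldsymbol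 h)$, $\alpha_s+\alpha_b+\alpha_t=1$, $\mu_s+\mu_b+\mu_t=\mu$. Its total output is $Y=\alpha_b n(\boldsymbol m)F(\boldsymbol m\vee\boldsymbol h)+\alpha_tF(\boldsymbol m\vee\boldsymbol h)+\alpha_sF(\boldsymbol h)+\mu_sF(\boldsymbol m)$. An equilibrium is a feasible allocation and prices $(w,r)\ge0$ such that every firm type has nonpositive profit and every firm type used with positive mass earns zero profit. Define $\bar w_s=F(\boldsymbol h)$, $\bar w_b=n(\boldsymbol m)\big(F(\boldsymbol m\vee\boldsymbol h)-F(\boldsymbol m)\big)$ (with $\bar w_b:=0$ if $F(\boldsymbol m)=1$), $\bar w_t=F(\boldsymbol m\vee\boldsymbol h)-F(\boldsymbol m)/n(\boldsymbol h)$, and the regions $R_s=\{\boldsymbol m\in[0,1]^2:\bar w_s\ge\max\{\bar w_b,\bar w_t\}\}$, $R_b=\{\boldsymbol m:\bar w_b>\max\{\bar w_s,\bar w_t\}\}$, $R_t=[0,1]^2\setminus(R_s\cup R_b)$. Abundance condition (A): $\mu>\max\Big\{\frac{1}{c(1-F(1,h_2))},\frac{1}{c(1-F(h_1,1))}\Big\}$. *)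

(* Defs.v *)
From HB Require Import structures.
From mathcomp Require Import all_boot all_order all_algebra.
From mathcomp Require Import all_classical all_reals all_analysis.
Set Implicit Arguments. Unset Strict Implicit. Unset Printing Implicit Defensive.
Import Order.TTheory GRing.Theory Num.Theory.
Local Open Scope classical_set_scope.
Local Open Scope ring_scope.

Section Model.
Variable R : realType.

Definition unit_square : set (R * R) := `[0%R, 1%R]%classic `*` `[0%R, 1%R]%classic.

Definition leb2 := ((@lebesgue_measure R) \x (@lebesgue_measure R))%E.

Definition density_cdf (f : R * R -> R) (x : R * R) : R :=
  fine (\int[leb2]_(y in `[0%R, x.1]%classic `*` `[0%R, x.2]%classic) (f y)%:E)%E.

Definition full_support_density (f : R * R -> R) : Prop :=
  [/\ measurable_fun unit_square f,
      (forall y, unit_square y -> 0 < f y),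
      leb2.-integrable unit_square (fun y => (f y)%:E)
    & (\int[leb2]_(y in unit_square) (f y)%:E = 1)%E].

Definition vee (x y : R * R) : R * R := (Num.max x.1 y.1, Num.max x.2 y.2).

Variables (F : R * R -> R) (c : R) (h m : R * R) (mu : R).

Definition nn (x : R * R) : R := 1 / (c * (1 - F x)).

(** bottom-automated firms are available only when F(m) < 1 *)
Definition b_available : Prop := F m < 1.

Definition profit_s (w : R) : R := F h - w.
Definition profit_a (r : R) : R := F m - r.
Definition profit_b (w r : R) : R := nn m * (F (vee m h) - r) - w.
Definition profit_t (w r : R) : R := nn h * (F (vee m h) - w) - r.

Record alloc := Alloc {
  al_s : R; al_b : R; al_t : R; mu_s : R; mu_b : R; mu_t : R }.

Definition feasible (a : alloc) : Prop :=
  [/\ 0 <= al_s a, 0 <= al_b a & 0 <= al_t a] /\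
  [/\ 0 <= mu_s a, 0 <= mu_b a & 0 <= mu_t a] /\
  [/\ (if `[< b_available >] then mu_b a = al_b a * nn m
       else al_b a = 0 /\ mu_b a = 0),
      mu_t a = al_t a / nn h,
      al_s a + al_b a + al_t a = 1
    & mu_s a + mu_b a + mu_t a = mu].

Definition output (a : alloc) : R :=
  al_b a * nn m * F (vee m h) + al_t a * F (vee m h)
  + al_s a * F h + mu_s a * F m.

Definition equilibrium (a : alloc) (w r : R) : Prop :=
  [/\ feasible a, 0 <= w, 0 <= r,
      [/\ profit_s w <= 0, profit_a r <= 0,
          (b_available -> profit_b w r <= 0) & profit_t w r <= 0]
    &
      [/\ (0 < al_s a -> profit_s w = 0),
          (0 < mu_s a -> profit_a r = 0),
          (0 < al_b a -> profit_b w r = 0)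
        & (0 < al_t a -> profit_t w r = 0)]].

Definition wbar_s : R := F h.
Definition wbar_b : R :=
  if `[< b_available >] then nn m * (F (vee m h) - F m) else 0.
Definition wbar_t : R := F (vee m h) - F m / nn h.

Definition wstar : R := Num.max wbar_s (Num.max wbar_b wbar_t).

Definition in_Rs : Prop := Num.max wbar_b wbar_t <= wbar_s.
Definition in_Rb : Prop := Num.max wbar_s wbar_t < wbar_b.
Definition in_Rt : Prop := ~ in_Rs /\ ~ in_Rb.

Definition unique_max : Prop :=
  [\/ wbar_b < wbar_s /\ wbar_t < wbar_s,
      wbar_s < wbar_b /\ wbar_t < wbar_b
    | wbar_s < wbar_t /\ wbar_b < wbar_t].

Definition star_alloc : alloc :=
  if `[< in_Rs >] then Alloc 1 0 0 mu 0 0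
  else if `[< in_Rb >] then Alloc 0 1 0 (mu - nn m) (nn m) 0
  else Alloc 0 0 1 (mu - 1 / nn h) 0 (1 / nn h).

End Model.

Definition abundance {R : realType} (F : R * R -> R) (c mu : R) (h : R * R) : Prop :=
  Num.max (1 / (c * (1 - F (1, h.2)))) (1 / (c * (1 - F (h.1, 1)))) < mu.

(* Main.v *)
Require Import Defs.
From HB Require Import structures.
From mathcomp Require Import all_boot all_order all_algebra.
From mathcomp Require Import all_classical all_reals all_analysis.
From mathcomp Require Import measurable_realfun.
From mathcomp.algebra_tactics Require Import ring lra.
Import Order.TTheory GRing.Theory Num.Theory.
Local Open Scope classical_set_scope.
Local Open Scope ring_scope.

Section Ana.
Variable R : realType.
Variable f : R * R -> R.
Hypothesis Hf : full_support_density f.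

Local Notation I A := (\int[@leb2 R]_(y in A) (f y)%:E)%E.

Lemma msq : measurable (@unit_square R).
Proof. by apply: measurableX; apply: measurable_itv. Qed.

Lemma mrect (A B : set R) : measurable A -> measurable B ->
   measurable (A `*` B).
Proof. by move=> mA mB; apply: measurableX. Qed.

Lemma I_ge0 A : A `<=` @unit_square R -> (0 <= I A)%E.
Proof.
move=> AS; apply: integral_ge0 => y Ay; rewrite lee_fin.
by case: Hf => _ hp _ _; apply/ltW/hp/AS.
Qed.

Lemma I_le1 A : measurable A -> A `<=` @unit_square R -> (I A <= 1)%E.
Proof.
move=> mA AS; case: Hf => hm hp _ h1; rewrite -h1.
apply: ge0_subset_integral => //; first exact: msq.
  by apply/measurable_EFinP.
by move=> y Sy; rewrite lee_fin; apply/ltW/hp.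
Qed.

Lemma I_gt0 A : measurable A -> A `<=` @unit_square R ->
  (0 < (@leb2 R) A)%E -> (0 < I A)%E.
Proof.
move=> mA AS mApos; rewrite lt0e I_ge0 // andbT; apply/negP => /eqP I0.
case: Hf => hm hp _ _.
have mfA : measurable_fun A f by exact: (measurable_funS msq AS hm).
have : (\int[@leb2 R]_(y in A) `|(f y)%:E| = 0)%E.
  rewrite -I0; apply: eq_integral => y; rewrite inE => Ay.
  by rewrite gee0_abs // lee_fin; apply/ltW/hp/AS.
move=> H0; have := (ae_eq_integral_abs (@leb2 R) mA (proj2 (measurable_EFinP _ _) mfA)).1 H0.
case=> N [mN N0 sN].
have : ((@leb2 R) A <= (@leb2 R) N)%E.
  apply: (le_measure (@leb2 R)); rewrite ?inE //.
  move=> y Ay; apply: sN => /= /(_ Ay) [] /eqP; apply/negP.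
  by rewrite gt_eqF //; apply/hp/AS.
move=> H1; move: mApos; rewrite ltNge; apply/negP/negPn; apply: (le_trans H1); rewrite le_eqVlt; apply/orP; left; apply/eqP; exact: N0.
Qed.

Lemma I_fin A : measurable A -> A `<=` @unit_square R -> I A = (fine (I A))%:E.
Proof.
move=> mA AS; rewrite fineK // ge0_fin_numE ?I_ge0 //.
by rewrite (le_lt_trans (I_le1 _ mA AS)) // ltey.
Qed.

Lemma rect_sub a b : 0 <= a <= 1 -> 0 <= b <= 1 ->
  `[0, a]%classic `*` `[0, b]%classic `<=` @unit_square R.
Proof.
move=> /andP[a0 a1] /andP[b0 b1] [y1 y2] /= [].
rewrite /= !in_itv /= => /andP[h1 h2] /andP[h3 h4]; split; rewrite /= in_itv /=.
  by rewrite h1 (le_trans h2).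
by rewrite h3 (le_trans h4).
Qed.

Lemma mrect2 a b : measurable (`[0, a]%classic `*` `[0, b]%classic : set (R * R)).
Proof. by apply: measurableX; apply: measurable_itv. Qed.

Local Notation Ir a b := (I (`[0%R, a]%classic `*` `[0%R, b]%classic)).

Lemma Ir_ge0 a b : 0 <= a <= 1 -> 0 <= b <= 1 -> (0 <= Ir a b)%E.
Proof. move=> ha hb; exact (I_ge0 _ (rect_sub _ _ ha hb)). Qed.
Lemma Ir_le1 a b : 0 <= a <= 1 -> 0 <= b <= 1 -> (Ir a b <= 1)%E.
Proof. move=> ha hb; exact (I_le1 _ (mrect2 a b) (rect_sub _ _ ha hb)). Qed.
Lemma Ir_fin a b : 0 <= a <= 1 -> 0 <= b <= 1 -> Ir a b \is a fin_num.
Proof.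
move=> ha hb; rewrite ge0_fin_numE ?Ir_ge0 //.
by rewrite (le_lt_trans (Ir_le1 _ _ ha hb)) // ltey.
Qed.

Lemma F_ge0 x : 0 <= x.1 <= 1 -> 0 <= x.2 <= 1 -> 0 <= density_cdf f x.
Proof. by move=> h1 h2; rewrite /density_cdf; apply: fine_ge0; apply: Ir_ge0. Qed.

Lemma F_le1 x : 0 <= x.1 <= 1 -> 0 <= x.2 <= 1 -> density_cdf f x <= 1.
Proof. by move=> h1 h2; rewrite /density_cdf -lee_fin fineK ?Ir_fin ?Ir_le1. Qed.

Lemma F_mono x y : 0 <= x.1 -> 0 <= x.2 -> x.1 <= y.1 <= 1 -> x.2 <= y.2 <= 1 ->
  density_cdf f x <= density_cdf f y.
Proof.
move=> x10 x20 /andP[xy1 y1] /andP[xy2 y2].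
have hx1 : 0 <= x.1 <= 1 by rewrite x10 (le_trans xy1).
have hx2 : 0 <= x.2 <= 1 by rewrite x20 (le_trans xy2).
have hy1 : 0 <= y.1 <= 1 by rewrite (le_trans x10 xy1).
have hy2 : 0 <= y.2 <= 1 by rewrite (le_trans x20 xy2).
rewrite /density_cdf; apply: fine_le; try exact: Ir_fin.
case: Hf => hm hp _ _.
have mf : measurable_fun (`[0, y.1]%classic `*` `[0, y.2]%classic) (fun z => (f z)%:E).
  apply/measurable_EFinP; exact (measurable_funS msq (rect_sub _ _ hy1 hy2) hm).
have f0 : forall z, (`[0, y.1]%classic `*` `[0, y.2]%classic) z -> (0 <= (f z)%:E)%E.
  by move=> z /(rect_sub _ _ hy1 hy2) Sz; rewrite lee_fin; apply/ltW/hp.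
have sub : `[0, x.1]%classic `*` `[0, x.2]%classic `<=` `[0, y.1]%classic `*` `[0, y.2]%classic.
  move=> [z1 z2] /= []; rewrite /= !in_itv /= => /andP[a1 a2] /andP[a3 a4]; split; rewrite /=.
    by rewrite a1 (le_trans a2).
  by rewrite a3 (le_trans a4).
exact (ge0_subset_integral (@leb2 R) (mrect2 x.1 x.2) (mrect2 y.1 y.2) mf f0 sub).
Qed.

Lemma leb_cc (a b : R) : a < b -> (0 < (@lebesgue_measure R) `[a, b]%classic)%E.
Proof. by move=> ab; rewrite lebesgue_measure_itv /= lte_fin ab -EFinD lte_fin subr_gt0. Qed.
Lemma leb_oc (a b : R) : a < b -> (0 < (@lebesgue_measure R) `]a, b]%classic)%E.
Proof. by move=> ab; rewrite lebesgue_measure_itv /= lte_fin ab -EFinD lte_fin subr_gt0. Qed.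

Lemma leb2X (A B : set R) : measurable A -> measurable B ->
  (@leb2 R) (A `*` B) = ((@lebesgue_measure R) A * (@lebesgue_measure R) B)%E.
Proof. by move=> mA mB; rewrite /leb2 product_measure1E. Qed.

Lemma F_gt0 x : 0 < x.1 <= 1 -> 0 < x.2 <= 1 -> 0 < density_cdf f x.
Proof.
move=> /andP[a0 a1] /andP[b0 b1].
have ha : 0 <= x.1 <= 1 by rewrite ltW.
have hb : 0 <= x.2 <= 1 by rewrite ltW.
rewrite /density_cdf; apply: fine_gt0; apply/andP; split; last first.
  by rewrite (le_lt_trans (Ir_le1 _ _ ha hb)) // ltey.
apply: (I_gt0 _ (mrect2 _ _) (rect_sub _ _ ha hb)).
rewrite leb2X; try exact: measurable_itv.
by apply: mule_gt0; apply: leb_cc.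
Qed.

Lemma I_lt1 A B : measurable A -> measurable B -> A `|` B = @unit_square R ->
  A `&` B = set0 -> (0 < (@leb2 R) B)%E -> (I A < 1)%E.
Proof.
move=> mA mB E dAB Bpos.
have AS : A `<=` @unit_square R by rewrite -E => z Az; left.
have BS : B `<=` @unit_square R by rewrite -E => z Bz; right.
have IB := I_gt0 _ mB BS Bpos.
case: Hf => hm hp _ h1.
rewrite -E in h1 hm hp.
rewrite (ge0_integral_setU (@leb2 R) mA mB) in h1; last 3 first.
- exact/measurable_EFinP.
- by move=> z Sz; rewrite lee_fin; apply/ltW/hp.
- by rewrite disj_set2E; apply/eqP.
move: h1 IB; rewrite (I_fin _ mA AS) (I_fin _ mB BS) -EFinD => /eqP; rewrite eqe => /eqP h1.
rewrite !lte_fin => hB; rewrite -h1; rewrite ltrDl //.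
Qed.

Lemma F_lt1_l a : 0 <= a < 1 -> density_cdf f (a, 1) < 1.
Proof.
move=> /andP[a0 a1].
have ha : 0 <= a <= 1 by rewrite a0 ltW.
have h1 : 0 <= (1:R) <= 1 by rewrite ler01 lexx.
rewrite /density_cdf /= -lte_fin fineK ?Ir_fin //.
apply: (I_lt1 _ (`]a, 1]%classic `*` `[0%R, 1]%classic) (mrect2 a 1)).
- by apply: measurableX; apply: measurable_itv.
- apply/seteqP; split.
    move=> [z1 z2] /= [] /= [] /=; rewrite /= !in_itv /= => /andP[p1 p2] /andP[p3 p4]; split => /=; rewrite in_itv /=.
      - by rewrite p1 (le_trans p2 (ltW a1)).
      - by rewrite p3 p4.
      - by rewrite (le_trans a0 (ltW p1)) p2.
      - by rewrite p3 p4.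
  move=> [z1 z2] /= [] /=; rewrite /= !in_itv /= => /andP[p1 p2] /andP[p3 p4].
  case: (leP z1 a) => za; [left|right]; rewrite ?p1 ?za ?p3 ?p4 ?p2 //.
- apply/seteqP; split => // [[z1 z2]] /= [] [] /=; rewrite /= !in_itv /=.
  by move=> /andP[_ p] _ [] /andP[q _]; move: (lt_le_trans q p); rewrite ltxx.
- rewrite leb2X; try exact: measurable_itv.
  by apply: mule_gt0; [apply: leb_oc | apply: leb_cc; apply: ltr01].
Qed.

Lemma F_lt1_r b : 0 <= b < 1 -> density_cdf f (1, b) < 1.
Proof.
move=> /andP[a0 a1].
have ha : 0 <= b <= 1 by rewrite a0 ltW.
have h1 : 0 <= (1:R) <= 1 by rewrite ler01 lexx.
rewrite /density_cdf /= -lte_fin fineK ?Ir_fin //.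
apply: (I_lt1 _ (`[0%R, 1]%classic `*` `]b, 1]%classic) (mrect2 1 b)).
- by apply: measurableX; apply: measurable_itv.
- apply/seteqP; split.
    move=> [z1 z2] /= [] /= [] /=; rewrite /= !in_itv /= => /andP[p1 p2] /andP[p3 p4]; split => /=; rewrite in_itv /=.
      - by rewrite p1 p2.
      - by rewrite p3 (le_trans p4 (ltW a1)).
      - by rewrite p1 p2.
      - by rewrite (le_trans a0 (ltW p3)) p4.
  move=> [z1 z2] /= [] /=; rewrite /= !in_itv /= => /andP[p1 p2] /andP[p3 p4].
  case: (leP z2 b) => za; [left|right]; rewrite ?p1 ?za ?p3 ?p4 ?p2 //.
- apply/seteqP; split => // [[z1 z2]] /= [] [] /=; rewrite /= !in_itv /=.
  by move=> _ /andP[_ p] [] _ /andP[q _]; move: (lt_le_trans q p); rewrite ltxx.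
- rewrite leb2X; try exact: measurable_itv.
  by apply: mule_gt0; [apply: leb_cc; apply: ltr01 | apply: leb_oc].
Qed.
End Ana.
Section Core.
Variable R : realType.
Variables (F : R * R -> R) (c mu : R) (h m : R * R).
Hypotheses (c0 : 0 < c) (c1 : c < 1) (Fh0 : 0 < F h) (Fh1 : F h < 1)
  (Fm0 : 0 <= F m) (mu1 : 1 < mu)
  (key : vee m h <> m -> F m < 1 -> nn F c m < mu).

Let Nh := nn F c h.
Let Nm := nn F c m.

Lemma Nh0 : 0 < Nh.
Proof. by rewrite /Nh /nn divr_gt0 // mulr_gt0 // subr_gt0. Qed.

Lemma iNh : 1 / Nh = c * (1 - F h).
Proof. by rewrite /Nh /nn !div1r invrK. Qed.

Lemma iNh_lt : 1 / Nh < mu.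
Proof. rewrite iNh mulrBr mulr1. have := mulr_gt0 c0 Fh0. move: c1 mu1. lra. Qed.

Lemma Nm0 : F m < 1 -> 0 < Nm.
Proof. by move=> h1; rewrite /Nm /nn divr_gt0 // mulr_gt0 // subr_gt0. Qed.

Definition slack (a : alloc R) w r :=
  al_s a * (- profit_s F h w) + mu_s a * (- profit_a F m r)
  + al_b a * (- profit_b F c h m w r) + (al_t a / Nh) * (- profit_t F c h m w r).

Lemma slack_id a w r : feasible F c h m mu a ->
  w + r * mu - output F c h m a = slack a w r.
Proof.
case=> _ [_ [Hb Ht Hs Hm]].
rewrite /slack /output /profit_s /profit_a /profit_b /profit_t -Hm Ht.
have Nh0' : Nh != 0 by rewrite gt_eqF // Nh0.
have E : w = w * (al_s a + al_b a + al_t a) by rewrite Hs mulr1.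
rewrite {1}E.
case: asboolP Hb => _ Hb.
  rewrite Hb -/Nm -/Nh. field.
  by [].
case: Hb => -> ->; rewrite -/Nm -/Nh; field.
by [].
Qed.

Lemma slack_ge0 a w r : feasible F c h m mu a ->
  [/\ profit_s F h w <= 0, profit_a F m r <= 0,
      (b_available F m -> profit_b F c h m w r <= 0) & profit_t F c h m w r <= 0] ->
  0 <= slack a w r.
Proof.
case=> [[s0 b0 t0] [[ms0 mb0 mt0] [Hb Ht Hs Hm]]] [ps pa pb pt].
have Nh0 := Nh0.
rewrite /slack; apply: addr_ge0; [apply: addr_ge0; [apply: addr_ge0|]|].
- by apply: mulr_ge0 => //; rewrite oppr_ge0.
- by apply: mulr_ge0 => //; rewrite oppr_ge0.
- case: asboolP Hb => HB Hb.
    by apply: mulr_ge0 => //; rewrite oppr_ge0; apply: pb.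
  by case: Hb => -> _; rewrite mul0r.
- apply: mulr_ge0; last by rewrite oppr_ge0.
  by apply: divr_ge0 => //; apply: ltW.
Qed.

Lemma pos_or0 (x : R) : 0 <= x -> x = 0 \/ 0 < x.
Proof. by rewrite le_eqVlt => /orP [/eqP <-|->]; [left|right]. Qed.

Lemma slack_eq0 a w r : feasible F c h m mu a ->
  [/\ (0 < al_s a -> profit_s F h w = 0),
      (0 < mu_s a -> profit_a F m r = 0),
      (0 < al_b a -> profit_b F c h m w r = 0)
    & (0 < al_t a -> profit_t F c h m w r = 0)] ->
  slack a w r = 0.
Proof.
case=> [[s0 b0 t0] [[ms0 mb0 mt0] [Hb Ht Hs Hm]]] [ps pa pb pt].
rewrite /slack.
have -> : al_s a * - profit_s F h w = 0.
  by case: (pos_or0 _ s0) => [->|/ps ->]; rewrite ?mul0r ?oppr0 ?mulr0.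
have -> : mu_s a * - profit_a F m r = 0.
  by case: (pos_or0 _ ms0) => [->|/pa ->]; rewrite ?mul0r ?oppr0 ?mulr0.
have -> : al_b a * - profit_b F c h m w r = 0.
  by case: (pos_or0 _ b0) => [->|/pb ->]; rewrite ?mul0r ?oppr0 ?mulr0.
have -> : al_t a / Nh * - profit_t F c h m w r = 0.
  by case: (pos_or0 _ t0) => [->|/pt ->]; rewrite ?mul0r ?oppr0 ?mulr0.
by rewrite !addr0.
Qed.

Lemma eq_r a w r : equilibrium F c h m mu a w r -> r = F m.
Proof.
case=> [[[s0 b0 t0] [[ms0 mb0 mt0] [Hb Ht Hs Hm]]] w0 r0 [ps pa pb pt] [zs za zb zt]].
have [ms|ms] := pos_or0 _ ms0; last first.
  by move: (za ms); rewrite /profit_a => /eqP; rewrite subr_eq0 => /eqP.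
exfalso.
have kmu := iNh_lt.
have k0 : 0 < 1 / Nh by rewrite divr_gt0 // Nh0.
have Hmt : mu_t a = al_t a * (1 / Nh) by rewrite Ht /Nh div1r.
move: Hm; rewrite ms Hmt add0r.
have atk : al_t a * (1 / Nh) <= al_t a * mu by rewrite ler_wpM2l // ltW.
have Hs' : al_s a * mu + al_b a * mu + al_t a * mu = mu by rewrite -!mulrDl Hs mul1r.
have asm : 0 <= al_s a * mu by rewrite mulr_ge0 // ltW // (lt_trans ltr01 mu1).
have abm : 0 <= al_b a * mu by rewrite mulr_ge0 // ltW // (lt_trans ltr01 mu1).
have at1 : al_t a <= 1 by move: Hs s0 b0; lra.
have atk1 : al_t a * (1 / Nh) <= 1 / Nh by rewrite ler_piMl // ltW.
case: asboolP Hb => HB Hb; last first.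
  case: Hb => _ ->; move: atk1 kmu; lra.
rewrite Hb.
have [b_0|bpos] := pos_or0 _ b0.
  rewrite b_0 mul0r; move: atk1 kmu; lra.
have Nmpos : 0 < Nm := Nm0 HB.
have := zb bpos; rewrite /profit_b -/Nm => /eqP; rewrite subr_eq0 => /eqP E.
have VF : F m < F (vee m h).
  have : 0 < Nm * (F (vee m h) - r) by rewrite E; move: ps; rewrite /profit_s; move: Fh0; lra.
  rewrite pmulr_rgt0 // subr_gt0 => Vr; apply: le_lt_trans Vr.
  by move: pa; rewrite /profit_a subr_le0.
have NE : vee m h <> m by move=> E'; move: VF; rewrite E' ltxx.
have Nmu : al_b a * Nm < al_b a * mu by rewrite ltr_pM2l // key.
move: atk Hs' asm Nmu; lra.
Qed.

Lemma wt_le (w : R) : Nh * (F (vee m h) - w) - F m <= 0 -> wbar_t F c h m <= w.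
Proof.
move=> H; rewrite /wbar_t -/Nh.
have : F (vee m h) - w <= F m / Nh by rewrite ler_pdivlMr ?Nh0 // mulrC -subr_le0.
lra.
Qed.

Lemma wt_eq (w : R) : Nh * (F (vee m h) - w) - F m = 0 -> w = wbar_t F c h m.
Proof.
move=> /eqP; rewrite subr_eq0 => /eqP H; rewrite /wbar_t -/Nh -H [Nh * _]mulrC mulfK ?gt_eqF ?Nh0 //.
lra.
Qed.

Lemma eq_w a w r : equilibrium F c h m mu a w r -> w = wstar F c h m.
Proof.
move=> E; have rE := eq_r _ _ _ E; move: E; rewrite rE.
case=> [[[s0 b0 t0] [[ms0 mb0 mt0] [Hb Ht Hs Hm]]] w0 r0 [ps pa pb pt] [zs za zb zt]].
have ls : wbar_s F h <= w by move: ps; rewrite /profit_s /wbar_s subr_le0.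
have lb : wbar_b F c h m <= w.
  rewrite /wbar_b; case: asboolP => HB //.
  by move: (pb HB); rewrite /profit_b subr_le0.
have lt : wbar_t F c h m <= w by apply: wt_le; apply: pt.
apply/eqP; rewrite eq_le; apply/andP; split; last first.
  by rewrite /wstar !ge_max ls lb lt.
have [s_0|spos] := pos_or0 _ s0.
  have [b_0|bpos] := pos_or0 _ b0.
    have tpos : 0 < al_t a by move: Hs; rewrite s_0 b_0; lra.
    by rewrite (wt_eq _ (zt tpos)) /wstar !le_max lexx ?orbT.
  have HB : b_available F m.
    by move: Hb; case: asboolP => // _ [b0' _]; move: bpos; rewrite b0' ltxx.
  have : w = wbar_b F c h m.
    rewrite /wbar_b; case: asboolP => // _.
    by move: (zb bpos); rewrite /profit_b => /eqP; rewrite subr_eq0 => /eqP.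
  by move=> ->; rewrite /wstar !le_max lexx ?orbT.
have : w = wbar_s F h by move: (zs spos); rewrite /profit_s /wbar_s => /eqP; rewrite subr_eq0 => /eqP.
by move=> ->; rewrite /wstar !le_max lexx ?orbT.
Qed.

Lemma efficient a w r a' : equilibrium F c h m mu a w r -> feasible F c h m mu a' ->
  output F c h m a' <= output F c h m a.
Proof.
move=> E fa'; have := E; case=> fa _ _ P Z.
have e1 := slack_id _ w r fa; have e2 := slack_id _ w r fa'.
rewrite (slack_eq0 _ _ _ fa Z) in e1.
have := slack_ge0 _ _ _ fa' P; lra.
Qed.

Lemma used_s a w r : equilibrium F c h m mu a w r -> 0 < al_s a -> w = wbar_s F h.
Proof.
case=> _ _ _ _ [zs _ _ _] spos.
by move: (zs spos); rewrite /profit_s /wbar_s => /eqP; rewrite subr_eq0 => /eqP.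
Qed.

Lemma used_b a w r : equilibrium F c h m mu a w r -> 0 < al_b a -> w = wbar_b F c h m.
Proof.
move=> E bpos; have rE := eq_r _ _ _ E; move: E; rewrite rE.
case=> [[_ [_ [Hb _ _ _]]] _ _ _ [_ _ zb _]].
have HB : b_available F m.
  by move: Hb; case: asboolP => // _ [b0' _]; move: bpos; rewrite b0' ltxx.
rewrite /wbar_b; case: asboolP => // _.
by move: (zb bpos); rewrite /profit_b => /eqP; rewrite subr_eq0 => /eqP.
Qed.

Lemma used_t a w r : equilibrium F c h m mu a w r -> 0 < al_t a -> w = wbar_t F c h m.
Proof.
move=> E tpos; have rE := eq_r _ _ _ E; move: E; rewrite rE.
case=> _ _ _ _ [_ _ _ zt].
exact: (wt_eq _ (zt tpos)).
Qed.

Lemma reg_s : in_Rs F c h m -> wstar F c h m = wbar_s F h.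
Proof. by move=> H; rewrite /wstar max_l. Qed.

Lemma reg_b : in_Rb F c h m -> wstar F c h m = wbar_b F c h m.
Proof.
rewrite /in_Rb gt_max => /andP[H1 H2].
by rewrite /wstar (max_l (ltW H2)) max_r // ltW.
Qed.

Lemma reg_t : ~ in_Rs F c h m -> ~ in_Rb F c h m ->
  [/\ wstar F c h m = wbar_t F c h m, wbar_s F h < wbar_t F c h m & wbar_b F c h m <= wbar_t F c h m].
Proof.
rewrite /in_Rs /in_Rb => /negP; rewrite -ltNge lt_max => H1 /negP; rewrite -leNgt le_max => H2.
have [st bt] : wbar_s F h < wbar_t F c h m /\ wbar_b F c h m <= wbar_t F c h m.
  case/orP: H1 => H1; case/orP: H2 => H2.
  - by move: (lt_le_trans H1 H2); rewrite ltxx.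
  - by split => //; apply: lt_le_trans H1 H2.
  - by split => //; apply: le_trans H2 (ltW H1).
  - by split.
by split => //; rewrite /wstar (max_r bt) max_r // ltW.
Qed.

Lemma wt_prof (w : R) : wbar_t F c h m <= w -> Nh * (F (vee m h) - w) - F m <= 0.
Proof.
rewrite /wbar_t -/Nh => H.
have : F (vee m h) - w <= F m / Nh by lra.
by rewrite ler_pdivlMr ?Nh0 // mulrC subr_le0.
Qed.

Lemma ws_ge : wbar_s F h <= wstar F c h m.
Proof. by rewrite /wstar le_max lexx. Qed.
Lemma wb_ge : wbar_b F c h m <= wstar F c h m.
Proof. by rewrite /wstar !le_max lexx ?orbT. Qed.
Lemma wt_ge : wbar_t F c h m <= wstar F c h m.
Proof. by rewrite /wstar !le_max lexx ?orbT. Qed.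

Lemma prof_star :
  [/\ profit_s F h (wstar F c h m) <= 0, profit_a F m (F m) <= 0,
      (b_available F m -> profit_b F c h m (wstar F c h m) (F m) <= 0)
    & profit_t F c h m (wstar F c h m) (F m) <= 0].
Proof.
split.
- by rewrite /profit_s subr_le0; apply: ws_ge.
- by rewrite /profit_a subrr.
- move=> HB; rewrite /profit_b subr_le0; have := wb_ge.
  by rewrite /wbar_b; case: asboolP.
- exact: (wt_prof _ wt_ge).
Qed.

Lemma wstar_ge0 : 0 <= wstar F c h m.
Proof. by apply: le_trans ws_ge; rewrite /wbar_s ltW. Qed.

Lemma star_eq : equilibrium F c h m mu (star_alloc F c h m mu) (wstar F c h m) (F m).
Proof.
have mu0 : 0 < mu by apply: lt_trans mu1.
have Nh0 := Nh0.
split; [|exact: wstar_ge0|exact: Fm0|exact: prof_star|].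
- rewrite /star_alloc; case: asboolP => HRs.
    split; [split=> //; exact: ler01|split; [split=> //; exact: ltW|]].
    split => /=; rewrite ?mul0r ?addr0 //.
    by case: asboolP => _; rewrite ?mul0r.
  case: asboolP => HRb.
    have wb := reg_b HRb.
    have bpos : 0 < wbar_b F c h m.
      by move: HRb; rewrite /in_Rb gt_max => /andP[H _]; apply: le_lt_trans H; rewrite /wbar_s ltW.
    have HB : b_available F m by move: bpos; rewrite /wbar_b; case: asboolP => //; rewrite ltxx.
    have NE : vee m h <> m.
      by move=> E; move: bpos; rewrite /wbar_b; case: asboolP => // _; rewrite E subrr mulr0 ltxx.
    have Nm_mu := key NE HB.
    have Nmp := Nm0 HB.
    split; [split=> //; exact: ler01|split; [split=> //=; rewrite ?subr_ge0 ltW //|]].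
    split => /=; rewrite ?mul0r ?addr0 ?add0r ?mul1r //.
      by case: asboolP.
    by rewrite subrK.
  have kmu := iNh_lt.
  split; [split=> //; exact: ler01|split; [split=> //=; rewrite ?subr_ge0 ?ltW // divr_gt0 // ltr01|]].
  split => /=; rewrite ?mul0r ?addr0 ?add0r ?mul1r //.
    by case: asboolP => _; rewrite ?mul0r.
  by rewrite subrK.
- rewrite /star_alloc; case: asboolP => HRs.
    split => /=; rewrite ?ltxx //.
    + by move=> _; rewrite /profit_s (reg_s HRs) /wbar_s subrr.
    + by move=> _; rewrite /profit_a subrr.
  case: asboolP => HRb.
    split => /=; rewrite ?ltxx //.
    + by move=> _; rewrite /profit_a subrr.
    + move=> _; rewrite /profit_b (reg_b HRb) /wbar_b.
      have bpos : 0 < wbar_b F c h m.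
        by move: HRb; rewrite /in_Rb gt_max => /andP[H _]; apply: le_lt_trans H; rewrite /wbar_s ltW.
      move: bpos; rewrite /wbar_b; case: asboolP => [_ _|]; first by rewrite subrr.
      by rewrite ltxx.
  split => /=; rewrite ?ltxx //.
  + by move=> _; rewrite /profit_a subrr.
  + move=> _; case: (reg_t HRs HRb) => -> _ _.
    rewrite /profit_t /wbar_t -/Nh.
    have -> : F (vee m h) - (F (vee m h) - F m / Nh) = F m / Nh by ring.
    by rewrite mulrC divfK ?subrr // gt_eqF.
Qed.

Lemma zero_of (x : R) : 0 <= x -> (0 < x -> False) -> x = 0.
Proof. by move=> /pos_or0 [//|H] /(_ H). Qed.

Lemma uniq_eq a w r : unique_max F c h m -> equilibrium F c h m mu a w r ->
  a = star_alloc F c h m mu.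
Proof.
move=> U E.
have wE := eq_w _ _ _ E.
have bU : 0 < al_b a -> wbar_b F c h m = wstar F c h m by move=> /(used_b _ _ _ E) <-.
have tU : 0 < al_t a -> wbar_t F c h m = wstar F c h m by move=> /(used_t _ _ _ E) <-.
have sU : 0 < al_s a -> wbar_s F h = wstar F c h m by move=> /(used_s _ _ _ E) <-.
move: E; case=> [[[s0 b0 t0] [[ms0 mb0 mt0] [Hb Ht Hs Hm]]] _ _ _ _].
move: s0 b0 t0 ms0 mb0 mt0 Hb Ht Hs Hm bU tU sU.
case: a => s b t ms mb mt /= s0 b0 t0 ms0 mb0 mt0 Hb Ht Hs Hm bU tU sU.
rewrite /star_alloc.
case: U => [[H1 H2]|[H1 H2]|[H1 H2]].
- have ws : wstar F c h m = wbar_s F h by rewrite /wstar max_l // ge_max !ltW.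
  have b_0 : b = 0 by apply: zero_of => // /bU; rewrite ws => E; move: H1; rewrite E ltxx.
  have t_0 : t = 0 by apply: zero_of => // /tU; rewrite ws => E; move: H2; rewrite E ltxx.
  have s1 : s = 1 by move: Hs; rewrite b_0 t_0 !addr0.
  have mt_0 : mt = 0 by rewrite Ht t_0 mul0r.
  have mb_0 : mb = 0 by move: Hb; case: asboolP => _; [rewrite b_0 mul0r|case].
  have ms_mu : ms = mu by move: Hm; rewrite mt_0 mb_0 !addr0.
  case: asboolP => [_|HRs]; first by rewrite s1 b_0 t_0 ms_mu mb_0 mt_0.
  by exfalso; apply: HRs; rewrite /in_Rs ge_max !ltW.
- have ws : wstar F c h m = wbar_b F c h m.
    by rewrite reg_b // /in_Rb gt_max H1 H2.
  have s_0 : s = 0 by apply: zero_of => // /sU; rewrite ws => E; move: H1; rewrite E ltxx.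
  have t_0 : t = 0 by apply: zero_of => // /tU; rewrite ws => E; move: H2; rewrite E ltxx.
  have b1 : b = 1 by move: Hs; rewrite s_0 t_0 addr0 add0r.
  have mt_0 : mt = 0 by rewrite Ht t_0 mul0r.
  have HB : b_available F m.
    by move: Hb; case: asboolP => // _ [b0' _]; move: b1; rewrite b0' => /eqP; rewrite eq_sym oner_eq0.
  have mb_N : mb = nn F c m by move: Hb; case: asboolP => // _ ->; rewrite b1 mul1r.
  have ms_mu : ms = mu - nn F c m by rewrite -Hm mb_N mt_0 addr0 addrK.
  case: asboolP => [HRs|_].
    by exfalso; move: HRs; rewrite /in_Rs ge_max => /andP[H _]; move: (lt_le_trans H1 H); rewrite ltxx.
  case: asboolP => [_|HRb]; first by rewrite s_0 b1 t_0 ms_mu mb_N mt_0.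
  by exfalso; apply: HRb; rewrite /in_Rb gt_max H1 H2.
- have NRs : ~ in_Rs F c h m.
    by rewrite /in_Rs ge_max => /andP[_ H]; move: (lt_le_trans H1 H); rewrite ltxx.
  have NRb : ~ in_Rb F c h m.
    by rewrite /in_Rb gt_max => /andP[_ H]; move: (lt_trans H2 H); rewrite ltxx.
  have [ws _ _] := reg_t NRs NRb.
  have s_0 : s = 0 by apply: zero_of => // /sU; rewrite ws => E; move: H1; rewrite E ltxx.
  have b_0 : b = 0 by apply: zero_of => // /bU; rewrite ws => E; move: H2; rewrite E ltxx.
  have t1 : t = 1 by move: Hs; rewrite s_0 b_0 !add0r.
  have mt_N : mt = 1 / nn F c h by rewrite Ht t1.
  have mb_0 : mb = 0 by move: Hb; case: asboolP => _; [rewrite b_0 mul0r|case].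
  have ms_mu : ms = mu - 1 / nn F c h by rewrite -Hm mb_0 mt_N addr0 addrK.
  case: asboolP => [//|_]; case: asboolP => [//|_].
  by rewrite s_0 b_0 t1 ms_mu mb_0 mt_N.
Qed.

Lemma core_thm :
  (exists a w r, equilibrium F c h m mu a w r) /\
  (forall a w r, equilibrium F c h m mu a w r ->
     [/\ r = F m, w = wstar F c h m
       & forall a', feasible F c h m mu a' ->
                    output F c h m a' <= output F c h m a]) /\
  equilibrium F c h m mu (star_alloc F c h m mu) (wstar F c h m) (F m) /\
  (unique_max F c h m ->
     forall a w r, equilibrium F c h m mu a w r -> a = star_alloc F c h m mu).
Proof.
split; first by exists (star_alloc F c h m mu), (wstar F c h m), (F m); exact: star_eq.
split.
  move=> a w r E; split; [exact: (eq_r _ _ _ E)|exact: (eq_w _ _ _ E)|].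
  by move=> a' fa'; apply: (efficient _ _ _ _ E fa').
split; first exact: star_eq.
by move=> U a w r E; apply: (uniq_eq _ _ _ U E).
Qed.
End Core.

Local Close Scope classical_set_scope.
Lemma inv_anti (R : realType) (x y : R) : 0 < y -> y <= x -> 1 / x <= 1 / y.
Proof.
move=> y0 yx; rewrite !div1r lef_pV2 // posrE //; exact: lt_le_trans yx.
Qed.

Theorem proposition1 (R : realType) (f : R * R -> R) (c mu : R) (h m : R * R) :
  full_support_density f ->
  0 < c < 1 ->
  0 < h.1 < 1 -> 0 < h.2 < 1 ->
  0 < mu ->
  abundance (density_cdf f) c mu h ->
  0 <= m.1 <= 1 -> 0 <= m.2 <= 1 ->
  let F := density_cdf f in
  (* existence *)
  (exists a w r, equilibrium F c h m mu a w r) /\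
  (* prices, and efficiency, in every equilibrium *)
  (forall a w r, equilibrium F c h m mu a w r ->
     [/\ r = F m, w = wstar F c h m
       & forall a', feasible F c h m mu a' ->
                    output F c h m a' <= output F c h m a]) /\
  (* the explicit allocation is an equilibrium with these prices *)
  equilibrium F c h m mu (star_alloc F c h m mu) (wstar F c h m) (F m) /\
  (* uniqueness when the maximum is attained by exactly one wbar *)
  (unique_max F c h m ->
     forall a w r, equilibrium F c h m mu a w r -> a = star_alloc F c h m mu).
Proof.
move=> Hf /andP[c0 c1] /andP[h10 h11] /andP[h20 h21] mu0 Hab /andP[m10 m11] /andP[m20 m21] F.
have i1 : 0 <= (1:R) <= 1 by rewrite ler01 lexx.
have hh1 : 0 <= h.1 <= 1 by rewrite !ltW.
have hh2 : 0 <= h.2 <= 1 by rewrite !ltW.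
have hm1 : 0 <= m.1 <= 1 by rewrite m10 m11.
have hm2 : 0 <= m.2 <= 1 by rewrite m20 m21.
have Fa : F (h.1, 1) < 1 by apply: (@F_lt1_l R f Hf); rewrite ltW.
have Fb : F (1, h.2) < 1 by apply: (@F_lt1_r R f Hf); rewrite ltW.
have Fa0 : 0 <= F (h.1, 1) by apply: (@F_ge0 R f Hf).
have Fb0 : 0 <= F (1, h.2) by apply: (@F_ge0 R f Hf).
have Fh0 : 0 < F h by apply: (@F_gt0 R f Hf); apply/andP; split => //; apply: ltW.
have Fh1 : F h < 1.
  apply: le_lt_trans Fa; apply: (@F_mono R f Hf) => //=; try exact: ltW.
    by rewrite lexx ltW.
  by rewrite lexx ltW.
have Fm0 : 0 <= F m by apply: (@F_ge0 R f Hf).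
move: Hab; rewrite /abundance gt_max -/F => /andP[A1 A2].
have mu1 : 1 < mu.
  apply: lt_trans A1; rewrite div1r invf_gt1; last by rewrite mulr_gt0 // subr_gt0.
  have : c * (1 - F (1, h.2)) <= c * 1 by apply: ler_wpM2l; [exact: ltW|move: Fb0; lra].
  by rewrite mulr1 => H; apply: le_lt_trans H c1.
apply: core_thm => // NE Fm1.
have [lt1|lt2] : m.1 < h.1 \/ m.2 < h.2.
  case: (ltP m.1 h.1) => [?|g1]; [by left|].
  case: (ltP m.2 h.2) => [?|g2]; [by right|].
  by exfalso; apply: NE; rewrite /vee (max_l g1) (max_l g2); case: (m).
- apply: le_lt_trans A2; rewrite /nn; apply: inv_anti.
    by rewrite mulr_gt0 // subr_gt0.
  apply: ler_wpM2l; first exact: ltW.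
  have : F m <= F (h.1, 1).
    apply: (@F_mono R f Hf) => //=; first by rewrite (ltW lt1) ltW.
    by rewrite m21 lexx.
  lra.
- apply: le_lt_trans A1; rewrite /nn; apply: inv_anti.
    by rewrite mulr_gt0 // subr_gt0.
  apply: ler_wpM2l; first exact: ltW.
  have : F m <= F (1, h.2).
    apply: (@F_mono R f Hf) => //=; first by rewrite m11 lexx.
    by rewrite (ltW lt2) ltW.
  lra.
Qed.
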